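(* There exists a unique $h\in\Delta_f$ such that $Ph=\lambda h$. Moreover $h$ is strictly positive on $\Omega$.
   Context: Let $I=[0,1)$ carry a metric $d_I$, fix $\theta\in(0,1)$, and let $\Omega=I^{\mathbb Z}$ with metric $d(x,y)=\sup_{k\in\mathbb Z}\theta^{|k|}d_I(x_k,y_k)$. Let $\tau:I\to I$ have full branches, so that $b=\#\tau^{-1}(t)$ is constant; let $p_\tau$ be a fixed point of $\tau$. Assume there is $\eta\in(0,1)$ such that every inverse branch $\zeta$ of $\tau$ satisfies $d_I(\zeta(s),\zeta(t))\le\eta\,d_I(s,t)$. Let $(\bar\tau x)_i=\tau(x_i)$. Let $\pi_k:\Omega\to\Omega$ keep the coordinates $|i|\le k$ and set the others to $p_\tau$; $\Phi_k=\Phi\circ\pi_k$. Fix $\beta\in(0,1]$; $|\Phi|_\infty=\sup|\Phi|$, $|\Phi|_\beta=\sup_{k\in\mathbb N}\sup_{x\neq y}|\Phi_k(x)-\Phi_k(y)|/d(x,y)^\beta$, $\|\Phi\|=|\Phi|_\infty+|\Phi|_\beta$, $\mathcal C=\{\Phi\in C(\Omega):\|\Phi\|<\infty\}$. An inverse branch of order $k$ is a choice $\zeta=(\zeta_j)_{|j|\le k}$ of inverse branches of $\tau$, with $(\zeta_x)_j=\zeta_j(x_j)$ for $|j|\le k$, $(\zeta_x)_j=x_j$ otherwise; $b_k=b^{2k+1}$. For real $f\in\mathcal C$, $P_k\Phi(x)=b_k^{-1}\sum_{|\zeta|=k}e^{f(\pi_k\zeta_x)}\Phi(\pi_k\zeta_x)$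 and $P\Phi=\lim_kP_k\Phi$ pointwise. Fix a Borel probability measure $\nu_0$ on $\Omega$ with $P^*\nu_0=\lambda\nu_0$, where $\lambda=\int P\mathbf 1\,d\nu_0$ (such exists). Put $B(z)=\exp\!\left(|f|_\beta\frac{\eta^\beta}{1-\eta^\beta}z^\beta\right)$ for $z\ge0$ and $\Delta_f=\{\Phi\in C(\Omega):\Phi\ge0,\ \nu_0(\Phi)=1,\ \Phi(x)\le B(d(x,y))\Phi(y)\ \forall x,y\in\Omega\}$. *)

(* Defs.v *)
From Stdlib Require Import Reals Lra ZArith List Classical ClassicalEpsilon.
Open Scope R_scope.

Definition I : Type := { t : R | 0 <= t < 1 }.
Definition Omega : Type := Z -> I.

(** Supremum of a set of reals (meaningful when bounded and nonempty). *)
Definition Rsup (E : R -> Prop) : R :=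
  match excluded_middle_informative (bound E /\ exists x, E x) with
  | left H => proj1_sig (completeness E (proj1 H) (proj2 H))
  | right _ => 0
  end.

(** Real power with the convention 0^beta = 0 (beta > 0). *)
Definition rpow (z beta : R) : R :=
  if Req_EM_T z 0 then 0 else Rpower z beta.

Definition is_metric (dI : I -> I -> R) : Prop :=
  (forall s t, 0 <= dI s t) /\ (forall s t, dI s t = 0 <-> s = t) /\
  (forall s t, dI s t = dI t s) /\
  (forall s t u, dI s u <= dI s t + dI t u).

Definition distOm (dI : I -> I -> R) (theta : R) (x y : Omega) : R :=
  Rsup (fun r => exists k : Z, r = theta ^ (Z.abs_nat k) * dI (x k) (y k)).

(** tau has full branches: zeta 0, ..., zeta (b-1) are its inverse branches,
    enumerating (without repetition) the b preimages of every point. *)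
Definition inverse_branches (tau : I -> I) (b : nat) (zeta : nat -> I -> I) : Prop :=
  (forall j t, (j < b)%nat -> tau (zeta j t) = t) /\
  (forall t s, tau s = t -> exists j, (j < b)%nat /\ zeta j t = s) /\
  (forall j1 j2 t, (j1 < b)%nat -> (j2 < b)%nat -> zeta j1 t = zeta j2 t -> j1 = j2).

Definition pik (p : I) (k : nat) (x : Omega) : Omega :=
  fun i => if (Z.abs i <=? Z.of_nat k)%Z then x i else p.

Definition continuous_Om (d : Omega -> Omega -> R) (Phi : Omega -> R) : Prop :=
  forall x eps, 0 < eps -> exists del, 0 < del /\
    forall y, d x y < del -> Rabs (Phi y - Phi x) < eps.

Definition in_C (d : Omega -> Omega -> R) (p : I) (beta : R) (Phi : Omega -> R) : Prop :=
  continuous_Om d Phi /\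
  (exists M, forall x, Rabs (Phi x) <= M) /\
  (exists L, forall (k : nat) x y, x <> y ->
     Rabs (Phi (pik p k x) - Phi (pik p k y)) <= L * rpow (d x y) beta).

Definition holder_semi (d : Omega -> Omega -> R) (p : I) (beta : R) (Phi : Omega -> R) : R :=
  Rsup (fun r => exists (k : nat) x y, x <> y /\
     r = Rabs (Phi (pik p k x) - Phi (pik p k y)) / rpow (d x y) beta).

Fixpoint rsum (n : nat) (g : nat -> R) : R :=
  match n with O => 0 | S m => rsum m g + g m end.

Definition updZ (s : Z -> nat) (i : Z) (c : nat) : Z -> nat :=
  fun j => if Z.eq_dec j i then c else s j.

(** Sum of F over all choices of a branch index < b for every coordinate in l. *)
Fixpoint sum_choices (b : nat) (l : list Z) (F : (Z -> nat) -> R) : R :=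
  match l with
  | nil => F (fun _ => O)
  | i :: l' => rsum b (fun c => sum_choices b l' (fun s => F (updZ s i c)))
  end.

Definition coords (k : nat) : list Z :=
  map (fun n => (Z.of_nat n - Z.of_nat k)%Z) (seq 0 (2 * k + 1)).

Definition branch_apply (zeta : nat -> I -> I) (k : nat) (sigma : Z -> nat) (x : Omega) : Omega :=
  fun j => if (Z.abs j <=? Z.of_nat k)%Z then zeta (sigma j) (x j) else x j.

Definition Pk (b : nat) (zeta : nat -> I -> I) (p : I) (f : Omega -> R)
  (k : nat) (Phi : Omega -> R) (x : Omega) : R :=
  / INR (b ^ (2 * k + 1)) *
  sum_choices b (coords k) (fun sigma =>
     let y := pik p k (branch_apply zeta k sigma x) in exp (f y) * Phi y).

(** "P Phi = g": g is the pointwise limit of P_k Phi. *)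
Definition P_is (b : nat) (zeta : nat -> I -> I) (p : I) (f : Omega -> R)
  (Phi g : Omega -> R) : Prop :=
  forall x, Un_cv (fun k => Pk b zeta p f k Phi x) (g x).

Definition open_Om (d : Omega -> Omega -> R) (U : Omega -> Prop) : Prop :=
  forall x, U x -> exists r, 0 < r /\ forall y, d x y < r -> U y.

Definition sigma_algebra (S : (Omega -> Prop) -> Prop) : Prop :=
  S (fun _ => True) /\
  (forall A, S A -> S (fun x => ~ A x)) /\
  (forall A : nat -> Omega -> Prop, (forall n, S (A n)) -> S (fun x => exists n, A n x)).

Definition borel (d : Omega -> Omega -> R) (A : Omega -> Prop) : Prop :=
  forall S, sigma_algebra S -> (forall U, open_Om d U -> S U) -> S A.

Definition prob_measure (d : Omega -> Omega -> R) (mu : (Omega -> Prop) -> R) : Prop :=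
  mu (fun _ => True) = 1 /\
  (forall A, borel d A -> 0 <= mu A) /\
  (forall A : nat -> Omega -> Prop,
     (forall n, borel d (A n)) ->
     (forall n m x, n <> m -> A n x -> A m x -> False) ->
     infinite_sum (fun n => mu (A n)) (mu (fun x => exists n, A n x))).

Definition measurable (d : Omega -> Omega -> R) (g : Omega -> R) : Prop :=
  forall a, borel d (fun x => a < g x).

Definition ind (A : Omega -> Prop) (x : Omega) : R :=
  if excluded_middle_informative (A x) then 1 else 0.

Definition simple_below (d : Omega -> Omega -> R) (mu : (Omega -> Prop) -> R)
  (g : Omega -> R) (v : R) : Prop :=
  exists l : list (R * (Omega -> Prop)),
    Forall (fun pA => 0 <= fst pA /\ borel d (snd pA)) l /\
    (forall x, fold_right (fun pA acc => fst pA * ind (snd pA) x + acc) 0 l <= g x) /\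
    v = fold_right (fun pA acc => fst pA * mu (snd pA) + acc) 0 l.

Definition has_integral_nonneg (d : Omega -> Omega -> R) (mu : (Omega -> Prop) -> R)
  (g : Omega -> R) (v : R) : Prop :=
  measurable d g /\ (forall x, 0 <= g x) /\ is_lub (simple_below d mu g) v.

Definition has_integral (d : Omega -> Omega -> R) (mu : (Omega -> Prop) -> R)
  (g : Omega -> R) (v : R) : Prop :=
  measurable d g /\ exists v1 v2,
    has_integral_nonneg d mu (fun x => Rmax (g x) 0) v1 /\
    has_integral_nonneg d mu (fun x => Rmax (- g x) 0) v2 /\ v = v1 - v2.

Definition Bfun (hf eta beta z : R) : R :=
  exp (hf * (Rpower eta beta / (1 - Rpower eta beta)) * rpow z beta).

Definition Delta_f (d : Omega -> Omega -> R) (nu0 : (Omega -> Prop) -> R)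
  (hf eta beta : R) (Phi : Omega -> R) : Prop :=
  continuous_Om d Phi /\ (forall x, 0 <= Phi x) /\ has_integral d nu0 Phi 1 /\
  (forall x y, Phi x <= Bfun hf eta beta (d x y) * Phi y).

(* Main.v *)
Require Import Defs.
From Stdlib Require Import Reals Lra Lia ZArith List Classical ClassicalEpsilon
  FunctionalExtensionality PropExtensionality.
Open Scope R_scope.

Lemma exp_le : forall x y, x <= y -> exp x <= exp y.
Proof. intros x y H; destruct (Rle_lt_or_eq_dec _ _ H) as [H1|H1].
  apply Rlt_le, exp_increasing; auto. subst; lra. Qed.

Lemma Rsup_spec : forall E, bound E -> (exists x, E x) -> is_lub E (Rsup E).
Proof. intros E Hb He. unfold Rsup.
  destruct (excluded_middle_informative (bound E /\ (exists x, E x))) as [H|H].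
  - destruct (completeness E (proj1 H) (proj2 H)) as [l Hl]; simpl; auto.
  - exfalso; auto. Qed.

Lemma set_ext : forall (A B : Omega -> Prop), (forall x, A x <-> B x) -> A = B.
Proof. intros A B H; apply functional_extensionality; intro x;
  apply propositional_extensionality; auto. Qed.

Lemma rsum_ext : forall n u v, (forall c, (c < n)%nat -> u c = v c) -> rsum n u = rsum n v.
Proof. induction n; intros u v H; simpl; auto. rewrite (IHn u v); [rewrite H|]; auto; intros; apply H; lia. Qed.

Lemma rsum_mono : forall n u v, (forall c, (c < n)%nat -> u c <= v c) -> rsum n u <= rsum n v.
Proof. induction n; intros u v H; simpl; [lra|]. pose proof (IHn u v (fun c Hc => H c ltac:(lia))).
  pose proof (H n ltac:(lia)); lra. Qed.

Lemma rsum_lin : forall n u v a c, rsum n (fun i => a * u i + c * v i) = a * rsum n u + c * rsum n v.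
Proof. induction n; intros; simpl; [ring|]. rewrite IHn; ring. Qed.

Lemma rsum_const : forall n c, rsum n (fun _ => c) = INR n * c.
Proof. induction n; intros; simpl rsum; [simpl; ring|]. rewrite IHn, S_INR; ring. Qed.

Definition allb (b : nat) (s : Z -> nat) := forall j, (s j < b)%nat.

Lemma updZ_allb : forall b s i c, allb b s -> (c < b)%nat -> allb b (updZ s i c).
Proof. intros b s i c H Hc j; unfold updZ; destruct (Z.eq_dec j i); auto. Qed.

Lemma SC_mono : forall b l F G, (0 < b)%nat ->
  (forall s, allb b s -> F s <= G s) -> sum_choices b l F <= sum_choices b l G.
Proof. intros b l; induction l as [|i l IH]; intros F G Hb H; simpl.
  - apply H; intro; auto.
  - apply rsum_mono; intros c Hc; apply IH; auto; intros s Hs; apply H, updZ_allb; auto. Qed.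

Lemma SC_lin : forall b l F G a c,
  sum_choices b l (fun s => a * F s + c * G s) = a * sum_choices b l F + c * sum_choices b l G.
Proof. intros b l; induction l as [|i l IH]; intros; simpl; auto.
  rewrite <- rsum_lin; apply rsum_ext; intros; apply IH. Qed.

Lemma SC_const : forall b l c, sum_choices b l (fun _ => c) = INR (b ^ length l) * c.
Proof. intros b l; induction l as [|i l IH]; intros; simpl.
  - ring.
  - rewrite (rsum_ext _ _ (fun _ => INR (b ^ length l) * c)); [|intros; apply IH].
    rewrite rsum_const, mult_INR; ring. Qed.

Lemma SC_ext : forall b l F G, (forall s, F s = G s) -> sum_choices b l F = sum_choices b l G.
Proof. intros; f_equal; apply functional_extensionality; auto. Qed.

Lemma coords_length : forall k, length (coords k) = (2 * k + 1)%nat.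
Proof. intros; unfold coords; rewrite length_map, length_seq; auto. Qed.

Definition lim_or0 (u : nat -> R) : R :=
  match excluded_middle_informative (exists l, Un_cv u l) with
  | left H => proj1_sig (constructive_indefinite_description _ H)
  | right _ => 0 end.

Lemma lim_or0_eq : forall u l, Un_cv u l -> lim_or0 u = l.
Proof. intros u l H; unfold lim_or0.
  destruct (excluded_middle_informative (exists l, Un_cv u l)) as [H1|H1].
  - destruct (constructive_indefinite_description _ H1) as [l' Hl']; simpl.
    eapply UL_sequence; eauto.
  - exfalso; eauto. Qed.

Lemma Un_cv_const : forall c, Un_cv (fun _ => c) c.
Proof. intros c e He; exists O; intros; unfold Rdist; rewrite Rminus_diag, Rabs_R0; auto. Qed.

Lemma Un_cv_lin : forall u v lu lv a c, Un_cv u lu -> Un_cv v lv ->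
  Un_cv (fun n => a * u n + c * v n) (a * lu + c * lv).
Proof. intros. apply CV_plus; apply CV_mult; auto; apply Un_cv_const. Qed.

Lemma le_eps : forall a b, (forall e, 0 < e -> a <= b + e) -> a <= b.
Proof. intros a b H. destruct (Rle_or_lt a b); auto. specialize (H ((a-b)/2) ltac:(lra)); lra. Qed.

Section Main.
Variable dI : I -> I -> R.
Variable theta : R.
Variable tau : I -> I.
Variable b : nat.
Variable zeta : nat -> I -> I.
Variable p_tau : I.
Variable eta beta : R.
Variable f : Omega -> R.
Variable nu0 : (Omega -> Prop) -> R.
Variable lam : R.
Hypothesis HdI : is_metric dI.
Variable Mb : R.
Hypothesis HMb : forall s t, dI s t <= Mb.
Hypothesis Htheta : 0 < theta < 1.
Hypothesis Htau : inverse_branches tau b zeta.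
Hypothesis Hp : tau p_tau = p_tau.
Hypothesis Heta : 0 < eta < 1.
Hypothesis Hcontr : forall j s t, (j < b)%nat -> dI (zeta j s) (zeta j t) <= eta * dI s t.
Hypothesis Hbeta : 0 < beta <= 1.
Hypothesis Hf : in_C (distOm dI theta) p_tau beta f.
Variable Mf : R.
Hypothesis HMf : forall x, Rabs (f x) <= Mf.
Hypothesis Hnu0 : prob_measure (distOm dI theta) nu0.
Hypothesis Hlam : exists g, P_is b zeta p_tau f (fun _ => 1) g /\
                    has_integral (distOm dI theta) nu0 g lam.
Hypothesis Heig : forall Phi, in_C (distOm dI theta) p_tau beta Phi ->
            exists g, P_is b zeta p_tau f Phi g /\
              forall v, has_integral (distOm dI theta) nu0 Phi v ->
                        has_integral (distOm dI theta) nu0 g (lam * v).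

Local Notation d := (distOm dI theta).
Local Notation mu := nu0.

Lemma theta_pow_le1 : forall n, 0 < theta ^ n <= 1.
Proof. induction n; simpl; [lra|]. split; [apply Rmult_lt_0_compat; lra|]. nra. Qed.

Lemma dist_set_bound : forall x y, bound (fun r => exists k : Z, r = theta ^ (Z.abs_nat k) * dI (x k) (y k)).
Proof. intros x y; exists Mb; intros r [k ->].
  destruct HdI as [H0 _]. pose proof (theta_pow_le1 (Z.abs_nat k)).
  pose proof (H0 (x k) (y k)); pose proof (HMb (x k) (y k)); nra. Qed.

Lemma dist_lub : forall x y, is_lub (fun r => exists k : Z, r = theta ^ (Z.abs_nat k) * dI (x k) (y k)) (d x y).
Proof. intros; apply Rsup_spec; [apply dist_set_bound|]. exists (theta ^ Z.abs_nat 0 * dI (x 0%Z) (y 0%Z)); eauto. Qed.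

Lemma dist_ge : forall x y k, theta ^ (Z.abs_nat k) * dI (x k) (y k) <= d x y.
Proof. intros; apply (proj1 (dist_lub x y)); eauto. Qed.

Lemma dist_le : forall x y K, (forall k, theta ^ (Z.abs_nat k) * dI (x k) (y k) <= K) -> d x y <= K.
Proof. intros x y K H; apply (proj2 (dist_lub x y)); intros r [k ->]; auto. Qed.

Lemma dist_nonneg : forall x y, 0 <= d x y.
Proof. intros; eapply Rle_trans; [|apply (dist_ge x y 0%Z)].
  destruct HdI as [H0 _]. pose proof (theta_pow_le1 (Z.abs_nat 0)). pose proof (H0 (x 0%Z) (y 0%Z)); nra. Qed.

Lemma dist_bound : forall x y, d x y <= Mb.
Proof. intros; apply dist_le; intro k. destruct HdI as [H0 _]. pose proof (theta_pow_le1 (Z.abs_nat k)).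
  pose proof (H0 (x k) (y k)); pose proof (HMb (x k) (y k)); nra. Qed.

Lemma dist_sym : forall x y, d x y = d y x.
Proof. intros; apply Rle_antisym; apply dist_le; intro k; destruct HdI as [_ [_ [Hs _]]];
  rewrite Hs; apply dist_ge. Qed.

Lemma dist_pos : forall x y, x <> y -> 0 < d x y.
Proof. intros x y Hxy. destruct (classic (exists k, x k <> y k)) as [[k Hk]|Hn].
  - eapply Rlt_le_trans; [|apply (dist_ge x y k)]. destruct HdI as [H0 [H1 _]].
    apply Rmult_lt_0_compat; [apply theta_pow_le1|].
    destruct (Rle_lt_or_eq_dec _ _ (H0 (x k) (y k))) as [H|H]; auto.
    exfalso; apply Hk, H1; auto.
  - exfalso; apply Hxy; apply functional_extensionality; intro k.
    apply NNPP; intro; apply Hn; eauto. Qed.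

Lemma pik_idem : forall p k x, pik p k (pik p k x) = pik p k x.
Proof. intros; apply functional_extensionality; intro i; unfold pik.
  destruct (Z.abs i <=? Z.of_nat k)%Z; auto. Qed.

Lemma dist_pik : forall p k x y, d (pik p k x) (pik p k y) <= d x y.
Proof. intros; apply dist_le; intro j; unfold pik.
  destruct (Z.abs j <=? Z.of_nat k)%Z; [apply dist_ge|].
  destruct HdI as [H0 [H1 _]]. rewrite (proj2 (H1 p p) eq_refl). rewrite Rmult_0_r; apply dist_nonneg. Qed.

Lemma dist_branch : forall k s x y, allb b s ->
  d (pik p_tau k (branch_apply zeta k s x)) (pik p_tau k (branch_apply zeta k s y)) <= eta * d x y.
Proof. intros k s x y Hs; apply dist_le; intro j; unfold pik, branch_apply.
  destruct (Z.abs j <=? Z.of_nat k)%Z.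
  - pose proof (Hcontr (s j) (x j) (y j) (Hs j)). pose proof (dist_ge x y j).
    pose proof (theta_pow_le1 (Z.abs_nat j)). nra.
  - destruct HdI as [H0 [H1 _]]. rewrite (proj2 (H1 p_tau p_tau) eq_refl). rewrite Rmult_0_r.
    pose proof (dist_nonneg x y); nra. Qed.

Lemma rpow_nonneg : forall z, 0 <= rpow z beta.
Proof. intros; unfold rpow; destruct (Req_EM_T z 0); [lra|]. unfold Rpower; apply Rlt_le, exp_pos. Qed.

Lemma rpow_pos : forall z, 0 < z -> 0 < rpow z beta.
Proof. intros; unfold rpow; destruct (Req_EM_T z 0); [lra|]. unfold Rpower; apply exp_pos. Qed.

Lemma rpow_mono : forall z1 z2, 0 <= z1 <= z2 -> rpow z1 beta <= rpow z2 beta.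
Proof. intros z1 z2 H. unfold rpow. destruct (Req_EM_T z1 0).
  - destruct (Req_EM_T z2 0); [lra|]. unfold Rpower; apply Rlt_le, exp_pos.
  - destruct (Req_EM_T z2 0); [lra|]. apply Rle_Rpower_l; lra. Qed.

Lemma rpow_mult : forall c z, 0 < c -> 0 <= z -> rpow (c * z) beta = Rpower c beta * rpow z beta.
Proof. intros c z Hc Hz. unfold rpow. destruct (Req_EM_T z 0) as [->|Hz0].
  - rewrite Rmult_0_r. destruct (Req_EM_T 0 0); [ring|lra].
  - destruct (Req_EM_T (c * z) 0) as [H|H]. exfalso; apply Rmult_integral in H; lra.
    rewrite Rpower_mult_distr; auto; lra. Qed.

Lemma rpow_small : forall e, 0 < e -> exists del, 0 < del /\ forall z, 0 <= z < del -> rpow z beta < e.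
Proof. intros e He. exists (Rpower e (/ beta)); split. unfold Rpower; apply exp_pos.
  intros z Hz. unfold rpow. destruct (Req_EM_T z 0); auto.
  eapply Rlt_le_trans; [apply Rlt_Rpower_l with (b:=Rpower e (/beta)); lra|].
  rewrite Rpower_mult, Rinv_l, Rpower_1; lra. Qed.

Lemma borel_True : borel d (fun _ => True).
Proof. intros S HS HU; apply HS. Qed.

Lemma borel_compl : forall A, borel d A -> borel d (fun x => ~ A x).
Proof. intros A HA S HS HU; apply HS, HA; auto. Qed.

Lemma borel_False : borel d (fun _ => False).
Proof. replace (fun _ : Omega => False) with (fun x : Omega => ~ (fun _ => True) x).
  apply borel_compl, borel_True. apply set_ext; intros; tauto. Qed.

Lemma borel_open : forall U, open_Om d U -> borel d U.
Proof. intros U HU S HS H; apply H; auto. Qed.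

Lemma borel_cunion : forall F : nat -> Omega -> Prop, (forall n, borel d (F n)) -> borel d (fun x => exists n, F n x).
Proof. intros F HF S HS HU; apply HS; intro n; apply HF; auto. Qed.

Lemma borel_and : forall A B, borel d A -> borel d B -> borel d (fun x => A x /\ B x).
Proof. intros A B HA HB.
  set (F := fun (n : nat) (x : Omega) => match n with O => ~ A x | _ => ~ B x end).
  replace (fun x => A x /\ B x) with (fun x => ~ (exists n, F n x)).
  - apply borel_compl, borel_cunion; intros [|n]; simpl; apply borel_compl; auto.
  - apply set_ext; intro x; split.
    + intro H; split; apply NNPP; intro H'; apply H; [exists O|exists 1%nat]; auto.
    + intros [H1 H2] [[|n] Hn]; auto. Qed.

Lemma mu_nonneg : forall A, borel d A -> 0 <= mu A.
Proof. destruct Hnu0 as [_ [H _]]; auto. Qed.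

Lemma mu_True : mu (fun _ => True) = 1.
Proof. destruct Hnu0 as [H _]; auto. Qed.

Lemma mu_ext : forall A B, (forall x, A x <-> B x) -> mu A = mu B.
Proof. intros; f_equal; apply set_ext; auto. Qed.

Lemma mu_empty : mu (fun _ => False) = 0.
Proof. destruct Hnu0 as [_ [Hn Ha]].
  pose proof (Ha (fun _ _ => False) (fun _ => borel_False) ltac:(auto)) as H. cbv beta in H.
  rewrite (mu_ext (fun x => exists n : nat, False) (fun _ => False)) in H by (intros; split; [intros [_ []]|tauto]).
  set (a := mu (fun _ => False)) in *. pose proof (Hn _ borel_False) as Ha0; fold a in Ha0.
  destruct (Rle_lt_or_eq_dec _ _ Ha0) as [Hpp|Hpp]; auto.
  destruct (H (a/2) ltac:(lra)) as [N HN]. specialize (HN (S N) ltac:(lia)).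
  rewrite sum_cte in HN. unfold Rdist in HN. rewrite !S_INR in HN. pose proof (pos_INR N).
  rewrite Rabs_right in HN; nra. Qed.

Lemma mu_add : forall X Y, borel d X -> borel d Y -> (forall x, X x -> Y x -> False) ->
  mu (fun x => X x \/ Y x) = mu X + mu Y.
Proof. intros X Y HX HY Hd. destruct Hnu0 as [_ [_ Ha]].
  set (F := fun (n : nat) => match n with O => X | 1%nat => Y | _ => (fun _ : Omega => False) end).
  assert (HF : forall n, borel d (F n)) by (intros [|[|n]]; simpl; auto using borel_False).
  assert (HD : forall n m x, n <> m -> F n x -> F m x -> False).
  { intros [|[|n]] [|[|m]] x Hnm; simpl; intros; try tauto; eauto. }
  pose proof (Ha F HF HD) as H.
  rewrite (mu_ext _ (fun x => X x \/ Y x)) in H.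
  2:{ intro x; split. intros [[|[|n]] Hn]; simpl in Hn; tauto.
      intros [H1|H1]; [exists O|exists 1%nat]; auto. }
  eapply uniqueness_sum; eauto.
  intros e He; exists 1%nat; intros n Hn.
  assert (Hs : forall k, sum_f_R0 (fun n => mu (F n)) (S k) = mu X + mu Y).
  { induction k. simpl; ring. rewrite tech5, IHk. simpl. rewrite mu_empty; ring. }
  destruct n; [lia|]. rewrite Hs. unfold Rdist; rewrite Rminus_diag, Rabs_R0; auto. Qed.

Lemma mu_split : forall C B, borel d C -> borel d B ->
  mu C = mu (fun x => C x /\ B x) + mu (fun x => C x /\ ~ B x).
Proof. intros C B HC HB. rewrite <- mu_add.
  - apply mu_ext; intro x; split; [|tauto]. intro; destruct (classic (B x)); tauto.
  - apply borel_and; auto.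
  - apply borel_and; auto; apply borel_compl; auto.
  - intros x; tauto. Qed.

Definition spt (l : list (R * (Omega -> Prop))) (x : Omega) : R :=
  fold_right (fun pA acc => fst pA * Defs.ind (snd pA) x + acc) 0 l.
Definition sval (E : Omega -> Prop) (l : list (R * (Omega -> Prop))) : R :=
  fold_right (fun pA acc => fst pA * mu (fun x => snd pA x /\ E x) + acc) 0 l.
Definition wf (l : list (R * (Omega -> Prop))) : Prop :=
  Forall (fun pA => 0 <= fst pA /\ borel d (snd pA)) l.

Lemma ind_in : forall A x, A x -> Defs.ind A x = 1.
Proof. intros; unfold Defs.ind; destruct (excluded_middle_informative (A x)); tauto. Qed.
Lemma ind_out : forall A x, ~ A x -> Defs.ind A x = 0.
Proof. intros; unfold Defs.ind; destruct (excluded_middle_informative (A x)); tauto. Qed.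

Lemma sval_split : forall l E B, wf l -> borel d E -> borel d B ->
  sval E l = sval (fun x => E x /\ B x) l + sval (fun x => E x /\ ~ B x) l.
Proof. induction l as [|[c A] l IH]; intros E B Hw HE HB; simpl; [ring|].
  inversion Hw as [|? ? [Hc HA] Hw']; subst; simpl in *.
  rewrite (IH E B Hw' HE HB). rewrite (mu_split (fun x => A x /\ E x) B) by (auto using borel_and).
  rewrite (mu_ext (fun x => A x /\ E x /\ B x) (fun x => (A x /\ E x) /\ B x)) by tauto.
  rewrite (mu_ext (fun x => A x /\ E x /\ ~ B x) (fun x => (A x /\ E x) /\ ~ B x)) by tauto.
  ring. Qed.

Lemma mu_E_nonneg : forall E, borel d E -> 0 <= mu E.
Proof. apply mu_nonneg. Qed.

Lemma bound0 : forall t E K, wf t -> borel d E -> (forall x, E x -> spt t x <= K) -> sval E t <= K * mu E.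
Proof. induction t as [|[c A] t IH]; intros E K Hw HE H; simpl in *.
  - destruct (classic (exists x, E x)) as [[x Hx]|Hn].
    + pose proof (H x Hx). pose proof (mu_nonneg _ HE). nra.
    + rewrite (mu_ext E (fun _ => False)) by (intro x; split; [intro; apply Hn; eauto|tauto]).
      rewrite mu_empty; lra.
  - inversion Hw as [|? ? [Hc HA] Hw']; subst; simpl in *.
    rewrite (sval_split t E A Hw' HE HA).
    assert (H1 : sval (fun x => E x /\ A x) t <= (K - c) * mu (fun x => E x /\ A x)).
    { apply IH; auto using borel_and. intros x [Hx HAx]. specialize (H x Hx).
      rewrite ind_in in H; auto. unfold spt in *; simpl in *; lra. }
    assert (H2 : sval (fun x => E x /\ ~ A x) t <= K * mu (fun x => E x /\ ~ A x)).
    { apply IH; auto using borel_and, borel_compl. intros x [Hx HAx]. specialize (H x Hx).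
      rewrite ind_out in H; auto. unfold spt in *; simpl in *; lra. }
    rewrite (mu_split E A HE HA).
    rewrite (mu_ext (fun x => A x /\ E x) (fun x => E x /\ A x)) by tauto. lra. Qed.

Lemma boundGE : forall s t E K, wf s -> wf t -> borel d E ->
  (forall x, E x -> spt t x <= spt s x + K) -> sval E t <= sval E s + K * mu E.
Proof. induction s as [|[c A] s IH]; intros t E K Hs Ht HE H; simpl in *.
  - rewrite Rplus_0_l. apply bound0; auto. intros x Hx; specialize (H x Hx); unfold spt in *; simpl in *; lra.
  - inversion Hs as [|? ? [Hc HA] Hs']; subst; simpl in *.
    rewrite (sval_split t E A Ht HE HA).
    assert (H1 : sval (fun x => E x /\ A x) t <= sval (fun x => E x /\ A x) s + (K + c) * mu (fun x => E x /\ A x)).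
    { apply IH; auto using borel_and. intros x [Hx HAx]. specialize (H x Hx).
      rewrite ind_in in H; auto. unfold spt in *; simpl in *; lra. }
    assert (H2 : sval (fun x => E x /\ ~ A x) t <= sval (fun x => E x /\ ~ A x) s + K * mu (fun x => E x /\ ~ A x)).
    { apply IH; auto using borel_and, borel_compl. intros x [Hx HAx]. specialize (H x Hx).
      rewrite ind_out in H; auto. unfold spt in *; simpl in *; lra. }
    rewrite (sval_split s E A Hs' HE HA).
    rewrite (mu_split E A HE HA).
    rewrite (mu_ext (fun x => A x /\ E x) (fun x => E x /\ A x)) by tauto. lra. Qed.

Lemma val_sval : forall l, fold_right (fun pA acc => fst pA * mu (snd pA) + acc) 0 l = sval (fun _ => True) l.
Proof. induction l as [|[c A] l IH]; simpl; auto. rewrite IH; f_equal; f_equal; apply mu_ext; tauto. Qed.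

Lemma boundG : forall s t K, wf s -> wf t -> (forall x, spt t x <= spt s x + K) ->
  sval (fun _ => True) t <= sval (fun _ => True) s + K.
Proof. intros. pose proof (boundGE s t (fun _ => True) K) as H'. rewrite mu_True in H'.
  rewrite <- (Rmult_1_r K). apply H'; auto using borel_True. Qed.

Definition scl (a : R) (l : list (R * (Omega -> Prop))) := map (fun pA => (a * fst pA, snd pA)) l.
Lemma spt_scl : forall a l x, spt (scl a l) x = a * spt l x.
Proof. induction l as [|[c A] l IH]; intros; unfold spt in *; simpl in *; [ring|]. rewrite IH; ring. Qed.
Lemma sval_scl : forall a l E, sval E (scl a l) = a * sval E l.
Proof. induction l as [|[c A] l IH]; intros; unfold sval in *; simpl in *; [ring|]. rewrite IH; ring. Qed.
Lemma wf_scl : forall a l, 0 <= a -> wf l -> wf (scl a l).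
Proof. induction l as [|[c A] l IH]; intros Ha Hw; simpl; [constructor|].
  inversion Hw as [|? ? [Hc HA] Hw']; subst; simpl in *. constructor.
  simpl; split; auto. apply Rmult_le_pos; auto. apply (IH Ha Hw'). Qed.

Definition HIN := has_integral_nonneg d mu.

Lemma HIN_ub : forall g v s, HIN g v -> wf s -> (forall x, spt s x <= g x) -> sval (fun _ => True) s <= v.
Proof. intros g v s [_ [_ [Hub _]]] Hw H. apply Hub. exists s; split; auto; split; auto.
  rewrite val_sval; auto. Qed.

Lemma HIN_lub : forall g v u, HIN g v ->
  (forall s, wf s -> (forall x, spt s x <= g x) -> sval (fun _ => True) s <= u) -> v <= u.
Proof. intros g v u [_ [_ [_ Hl]]] H. apply Hl. intros w [l [Hw [Hl' ->]]]. rewrite val_sval; apply H; auto. Qed.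

Lemma HIN_nonneg : forall g v, HIN g v -> 0 <= v.
Proof. intros g v Hg. pose proof Hg as [Hm [Hpp _]].
  apply (HIN_ub g v nil Hg); [constructor|]. intros; unfold spt; simpl; auto. Qed.

Lemma HIN_exists : forall g S, measurable d g -> (forall x, 0 <= g x <= S) -> exists v, HIN g v.
Proof. intros g S Hm Hg.
  assert (Hb : bound (simple_below d mu g)).
  { exists S. intros w [l [Hw [Hl ->]]]. rewrite val_sval.
    pose proof (bound0 l (fun _ => True) S Hw borel_True) as H. rewrite mu_True in H.
    rewrite <- (Rmult_1_r S); apply H; intros x _; eapply Rle_trans; [apply Hl|apply Hg]. }
  assert (He : exists w, simple_below d mu g w).
  { exists 0, nil; split; [constructor|]; split; simpl; auto. intro x; apply Hg. }
  destruct (completeness _ Hb He) as [v Hv]. exists v; split; auto; split; auto. intro x; apply Hg. Qed.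

Lemma HIN_mono : forall g g' v v' a, HIN g v -> HIN g' v' -> 0 <= a ->
  (forall x, a * g x <= g' x) -> a * v <= v'.
Proof. intros g g' v v' a Hg Hg' Ha H.
  destruct (Rle_lt_or_eq_dec _ _ Ha) as [Ha'|Ha'].
  - cut (v <= v' / a). { intro; apply (Rmult_le_compat_l a) in H0; [|lra].
      replace (a * (v'/a)) with v' in H0 by (field; lra); auto. }
    apply (HIN_lub g); auto. intros s Hw Hs.
    pose proof (HIN_ub g' v' (scl a s) Hg' (wf_scl a s Ha Hw)) as H1.
    rewrite sval_scl in H1. cut (a * sval (fun _ => True) s <= v').
    { intro; apply (Rmult_le_reg_l a); auto. replace (a * (v'/a)) with v' by (field; lra); auto. }
    apply H1; intro x; rewrite spt_scl. eapply Rle_trans; [|apply H]. apply Rmult_le_compat_l; auto.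
  - subst; rewrite Rmult_0_l; eapply HIN_nonneg; eauto. Qed.

Lemma HIN_ge_const : forall g v K, HIN g v -> 0 <= K -> (forall x, K <= g x) -> K <= v.
Proof. intros g v K Hg HK H.
  pose proof (HIN_ub g v ((K, fun _ => True) :: nil) Hg) as H1. unfold sval in H1; simpl in H1.
  rewrite (mu_ext (fun x => True /\ True) (fun _ => True)) in H1 by tauto. rewrite mu_True in H1.
  replace K with (K * 1 + 0) by ring. apply H1.
  - constructor; [simpl; split; auto using borel_True|constructor].
  - intro x; unfold spt; simpl; rewrite ind_in; auto; specialize (H x); lra. Qed.

Lemma HIN_le_const : forall g v K, HIN g v -> (forall x, g x <= K) -> v <= K.
Proof. intros g v K Hg H. apply (HIN_lub g); auto. intros s Hw Hs.
  pose proof (bound0 s (fun _ => True) K Hw borel_True) as H1. rewrite mu_True in H1.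
  rewrite <- (Rmult_1_r K); apply H1; intros x _; eapply Rle_trans; eauto. Qed.

Lemma HIN_unique : forall g v v', HIN g v -> HIN g v' -> v = v'.
Proof. intros g v v' H1 H2. apply Rle_antisym.
  - apply (HIN_lub g); auto; intros; eapply HIN_ub; eauto.
  - apply (HIN_lub g); auto; intros; eapply HIN_ub; eauto. Qed.

Lemma HIN_scale : forall g v a, HIN g v -> 0 < a -> HIN (fun x => a * g x) (a * v).
Proof. intros g v a Hg Ha. pose proof Hg as [Hm [Hpp Hl]]. split; [|split].
  - intro c. replace (fun x => c < a * g x) with (fun x => c / a < g x). apply Hm.
    apply set_ext; intro x; split; intro H.
    + apply (Rmult_lt_compat_l a) in H; auto. replace (a * (c / a)) with c in H by (field; lra); auto.
    + apply (Rmult_lt_reg_l a); auto. replace (a * (c / a)) with c by (field; lra); auto.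
  - intro x; specialize (Hpp x); nra.
  - split.
    + intros w [l [Hw [Hl' ->]]]. rewrite val_sval.
      assert (Hai : 0 <= / a) by (apply Rlt_le, Rinv_0_lt_compat; auto).
      pose proof (HIN_ub g v (scl (/a) l) Hg (wf_scl _ _ Hai Hw)) as H1.
      rewrite sval_scl in H1. cut (/a * sval (fun _ => True) l <= v).
      { intro H2; apply (Rmult_le_compat_l a) in H2; [|lra]. rewrite <- Rmult_assoc, Rinv_r, Rmult_1_l in H2; lra. }
      apply H1; intro x; rewrite spt_scl. specialize (Hl' x).
      apply (Rmult_le_compat_l (/a)) in Hl'; [|apply Rlt_le, Rinv_0_lt_compat; auto].
      rewrite <- Rmult_assoc, Rinv_l, Rmult_1_l in Hl'; auto; lra.
    + intros u Hu. cut (v <= u / a).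
      { intro H2; apply (Rmult_le_compat_l a) in H2; [|lra]. replace (a * (u/a)) with u in H2 by (field; lra); auto. }
      apply (HIN_lub g); auto. intros s Hw Hs.
      cut (a * sval (fun _ => True) s <= u).
      { intro H2. apply (Rmult_le_reg_l a); auto. replace (a * (u/a)) with u by (field; lra); auto. }
      rewrite <- sval_scl. apply Hu. exists (scl a s); split; [apply wf_scl; auto; lra|]; split.
      * intro x. change (spt (scl a s) x <= a * g x). rewrite spt_scl.
        apply Rmult_le_compat_l; [lra|apply Hs].
      * rewrite val_sval; auto. Qed.

Fixpoint layer (del : R) (n : nat) (G : Omega -> R) : list (R * (Omega -> Prop)) :=
  match n with O => nil | S n' => (del, fun x => INR (S n') * del < G x) :: layer del n' G end.

Lemma spt_cons : forall c A l x, spt ((c, A) :: l) x = c * Defs.ind A x + spt l x.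
Proof. reflexivity. Qed.

Lemma layer_wf : forall del n G, 0 <= del -> measurable d G -> wf (layer del n G).
Proof. induction n; intros G Hd Hm; simpl; constructor; auto. split; auto. apply Hm. apply IHn; auto. Qed.

Lemma layer_props : forall del G x, 0 < del -> forall n,
  spt (layer del n G) x <= INR n * del /\ (0 <= G x -> spt (layer del n G) x <= G x) /\
  Rmin (G x - del) (INR n * del) <= spt (layer del n G) x.
Proof. intros del G x Hd n; induction n as [|n [IH1 [IH2 IH3]]].
  - simpl. unfold spt; simpl. split; [lra|split; [lra|]]. rewrite Rmult_0_l; apply Rmin_r.
  - cbn [layer]. rewrite spt_cons. pose proof (pos_INR n) as Hpn.
    destruct (classic (INR (S n) * del < G x)) as [H|H].
    + rewrite ind_in by exact H. rewrite S_INR in *. split; [lra|split; [intro; lra|]].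
      eapply Rle_trans; [apply Rmin_r|].
      destruct (Rle_dec (G x - del) (INR n * del)).
      * rewrite Rmin_left in IH3; lra.
      * rewrite Rmin_right in IH3; lra.
    + rewrite ind_out by exact H. rewrite S_INR in *. split; [nra|split; [intro; lra|]].
      eapply Rle_trans; [apply Rmin_l|].
      rewrite Rmin_left in IH3; lra. Qed.

Lemma HIN_sub : forall g v t S, HIN g v -> 0 <= t -> (forall x, t <= g x <= S) ->
  HIN (fun x => g x - t) (v - t).
Proof. intros g v t S Hg Ht Hb. pose proof Hg as [Hm [Hpp Hl]].
  assert (Hm' : measurable d (fun x => g x - t)).
  { intro a. replace (fun x => a < g x - t) with (fun x => a + t < g x). apply Hm.
    apply set_ext; intro; lra. }
  split; [auto|split; [intro x; specialize (Hb x); lra|split]].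
  - intros w [l [Hw [Hl' ->]]]. rewrite val_sval.
    pose proof (HIN_ub g v ((t, fun _ => True) :: l) Hg) as H1.
    assert (Hv : sval (fun _ => True) ((t, fun _ => True) :: l) = t + sval (fun _ => True) l).
    { unfold sval at 1; simpl. fold (sval (fun _ => True) l).
      rewrite (mu_ext (fun x => True /\ True) (fun _ => True)) by tauto. rewrite mu_True; ring. }
    rewrite Hv in H1. cut (t + sval (fun _ => True) l <= v). lra.
    apply H1. constructor; [simpl; split; auto using borel_True|auto].
    intro x; rewrite spt_cons, ind_in by auto. specialize (Hl' x). change (spt l x <= g x - t) in Hl'. lra.
  - intros u Hu. cut (v <= u + t). lra.
    apply (HIN_lub g); auto. intros s Hs Hsg.
    apply le_eps; intros e He.
    destruct (INR_unbounded (S / e)) as [n Hn].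
    assert (HnS : S <= INR n * e).
    { apply (Rmult_lt_compat_r e) in Hn; auto. unfold Rdiv in Hn; rewrite Rmult_assoc, Rinv_l, Rmult_1_r in Hn; lra. }
    set (L := layer e n (fun x => g x - t)).
    assert (HLw : wf L) by (apply layer_wf; auto; lra).
    assert (HLu : sval (fun _ => True) L <= u).
    { apply Hu. exists L; split; auto; split.
      - intro x. change (spt L x <= g x - t). destruct (layer_props e (fun x => g x - t) x He n) as [_ [H2 _]].
        apply H2. specialize (Hb x); lra.
      - rewrite val_sval; auto. }
    pose proof (boundG L s (t + e) HLw Hs) as H1.
    cut (sval (fun _ => True) s <= sval (fun _ => True) L + (t + e)). lra.
    apply H1. intro x. pose proof (layer_props e (fun x => g x - t) x He n) as [_ [_ H3]].
    fold L in H3. specialize (Hsg x). specialize (Hb x).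
    unfold Rmin in H3; destruct (Rle_dec _ _); lra. Qed.

Lemma meas_const : forall c, measurable d (fun _ => c).
Proof. intros c a. destruct (Rlt_dec a c).
  - replace (fun _ : Omega => a < c) with (fun _ : Omega => True). apply borel_True. apply set_ext; intro; tauto.
  - replace (fun _ : Omega => a < c) with (fun _ : Omega => False). apply borel_False. apply set_ext; intro; tauto. Qed.

Lemma HIN_zero : HIN (fun _ => 0) 0.
Proof. split; [apply meas_const|split; [intro; lra|split]].
  - intros w [l [Hw [Hl ->]]]. rewrite val_sval.
    pose proof (bound0 l (fun _ => True) 0 Hw borel_True) as H. rewrite Rmult_0_l in H; apply H.
    intros x _; apply Hl.
  - intros u Hu; apply Hu. exists nil; split; [constructor|split; simpl; auto; intro; lra]. Qed.

Lemma HI_of_HIN : forall g v, HIN g v -> has_integral d mu g v.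
Proof. intros g v Hg. pose proof Hg as [Hm [Hpp _]]. split; auto. exists v, 0. split; [|split].
  - replace (fun x => Rmax (g x) 0) with g; auto. apply functional_extensionality; intro x.
    rewrite Rmax_left; auto.
  - replace (fun x => Rmax (- g x) 0) with (fun _ : Omega => 0). apply HIN_zero.
    apply functional_extensionality; intro x. rewrite Rmax_right; auto. specialize (Hpp x); lra.
  - ring. Qed.

Lemma HIN_of_HI : forall g v, has_integral d mu g v -> (forall x, 0 <= g x) -> HIN g v.
Proof. intros g v [Hm [v1 [v2 [H1 [H2 ->]]]]] Hpp.
  replace (fun x => Rmax (- g x) 0) with (fun _ : Omega => 0) in H2.
  2:{ apply functional_extensionality; intro x. rewrite Rmax_right; auto. specialize (Hpp x); lra. }
  rewrite (HIN_unique _ _ _ H2 HIN_zero).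
  replace (fun x => Rmax (g x) 0) with g in H1. rewrite Rminus_0_r; auto.
  apply functional_extensionality; intro x. rewrite Rmax_left; auto. Qed.


Definition q := Rpower eta beta.
Definition hf := holder_semi d p_tau beta f.
Definition astar := hf * (q / (1 - q)).
Definition Tf (a : R) := q * (hf + a).
Definition Rb := rpow Mb beta.
Definition Ea (a : R) := exp (a * Rb).
Definition ncone (a : R) (Phi : Omega -> R) :=
  (forall x, 0 <= Phi x) /\ forall x y, Phi x <= exp (a * rpow (d x y) beta) * Phi y.
Definition Good (a m : R) (Phi : Omega -> R) := ncone a Phi /\ HIN Phi m.
Definition Pk' := Pk b zeta p_tau f.
Definition Lop (Phi : Omega -> R) (x : Omega) := lim_or0 (fun k => Pk' k Phi x) / lam.
Definition Liter (n : nat) (Phi : Omega -> R) := Nat.iter n Lop Phi.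

Lemma q_bounds : 0 < q < 1.
Proof. unfold q; split. unfold Rpower; apply exp_pos.
  eapply Rlt_le_trans; [apply Rlt_Rpower_l with (b:=1); lra|].
  right; unfold Rpower; rewrite ln_1, Rmult_0_r, exp_0; auto. Qed.

Lemma b_pos : (0 < b)%nat.
Proof. destruct Htau as [_ [H2 _]]. destruct (H2 p_tau p_tau Hp) as [j [Hj _]]; lia. Qed.

Lemma rpow_d_bound : forall x y, 0 <= rpow (d x y) beta <= Rb.
Proof. intros; split; [apply rpow_nonneg|]. unfold Rb; apply rpow_mono; split; [apply dist_nonneg|apply dist_bound]. Qed.

Lemma Rb_nonneg : 0 <= Rb.
Proof. unfold Rb; apply rpow_nonneg. Qed.

Lemma Ea_ge1 : forall a, 0 <= a -> 1 <= Ea a.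
Proof. intros a Ha. unfold Ea. rewrite <- exp_0. apply exp_le. pose proof Rb_nonneg; nra. Qed.

Lemma exp_cone_le : forall a x y, 0 <= a -> exp (a * rpow (d x y) beta) <= Ea a.
Proof. intros. unfold Ea. apply exp_le. pose proof (rpow_d_bound x y). nra. Qed.

Lemma I_two : exists i : I, i <> p_tau.
Proof.
  assert (H0 : 0 <= 0 < 1) by lra. assert (H1 : 0 <= 1/2 < 1) by lra.
  set (i0 := exist (fun t => 0 <= t < 1) 0 H0). set (i1 := exist (fun t => 0 <= t < 1) (1/2) H1).
  assert (Hne : i0 <> i1). { intro H; apply (f_equal (@proj1_sig _ _)) in H; simpl in H; lra. }
  destruct (classic (i0 = p_tau)) as [E|E]; [exists i1; intro; apply Hne; congruence|exists i0; auto]. Qed.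

Lemma hf_lub : is_lub (fun r => exists (k : nat) x y, x <> y /\
     r = Rabs (f (pik p_tau k x) - f (pik p_tau k y)) / rpow (d x y) beta) hf.
Proof. unfold hf, holder_semi. apply Rsup_spec.
  - destruct Hf as [_ [_ [L HL]]]. exists L. intros r [k [x [y [Hxy ->]]]].
    pose proof (rpow_pos _ (dist_pos x y Hxy)) as Hr.
    specialize (HL k x y Hxy). apply (Rmult_le_reg_r (rpow (d x y) beta)); auto.
    unfold Rdiv; rewrite Rmult_assoc, Rinv_l; lra.
  - destruct I_two as [i Hi]. exists (Rabs (f (pik p_tau 0 (fun _ => i)) - f (pik p_tau 0 (fun _ => p_tau)))
      / rpow (d (fun _ => i) (fun _ => p_tau)) beta).
    exists 0%nat, (fun _ => i), (fun _ => p_tau); split; auto.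
    intro H; apply Hi; apply (f_equal (fun g => g 0%Z)) in H; auto. Qed.

Lemma hf_nonneg : 0 <= hf.
Proof. destruct hf_lub as [Hub _]. destruct I_two as [i Hi].
  set (x := fun _ : Z => i). set (y := fun _ : Z => p_tau).
  assert (Hxy : x <> y) by (intro H; apply Hi; apply (f_equal (fun g => g 0%Z)) in H; auto).
  eapply Rle_trans; [|apply Hub; exists 0%nat, x, y; split; eauto].
  apply Rmult_le_pos; [apply Rabs_pos|]. apply Rlt_le, Rinv_0_lt_compat, rpow_pos; auto. apply dist_pos; auto. Qed.

Lemma hf_bound : forall k X Y, pik p_tau k X = X -> pik p_tau k Y = Y ->
  f X <= f Y + hf * rpow (d X Y) beta.
Proof. intros k X Y HX HY. destruct (classic (X = Y)) as [->|Hne].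
  - pose proof hf_nonneg; pose proof (rpow_nonneg (d Y Y)); nra.
  - destruct hf_lub as [Hub _].
    pose proof (rpow_pos _ (dist_pos X Y Hne)) as Hr.
    assert (H : Rabs (f (pik p_tau k X) - f (pik p_tau k Y)) / rpow (d X Y) beta <= hf)
      by (apply Hub; exists k, X, Y; auto).
    rewrite HX, HY in H. apply (Rmult_le_compat_r (rpow (d X Y) beta)) in H; [|lra].
    unfold Rdiv in H; rewrite Rmult_assoc, Rinv_l, Rmult_1_r in H by lra.
    pose proof (Rle_abs (f X - f Y)); lra. Qed.

Lemma cone_diff : forall a Phi K, 0 <= a -> ncone a Phi -> (forall x, Phi x <= K) ->
  forall x y, Rabs (Phi y - Phi x) <= a * Ea a * K * rpow (d x y) beta.
Proof. intros a Phi K Ha [Hpos Hc] HK.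
  assert (Hgen : forall x y, Phi y - Phi x <= a * Ea a * K * rpow (d x y) beta).
  { intros x y. set (r := rpow (d x y) beta). pose proof (rpow_d_bound x y) as Hr. fold r in Hr.
    pose proof (Hc y x) as G1. rewrite dist_sym in G1. fold r in G1.
    pose proof (exp_ineq1_le (- (a * r))) as G2.
    assert (G3 : exp (a * r) - 1 <= a * r * exp (a * r)).
    { pose proof (exp_pos (a * r)). replace (exp (- (a * r))) with (/ exp (a * r)) in G2.
      2:{ rewrite exp_Ropp; auto. }
      apply (Rmult_le_compat_r (exp (a * r))) in G2; [|lra].
      rewrite Rinv_l in G2; [nra|lra]. }
    assert (G4 : exp (a * r) <= Ea a) by (unfold Ea; apply exp_le; nra).
    pose proof (Hpos x). pose proof (HK x). pose proof (exp_pos (a * r)).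
    assert (G5 : (exp (a * r) - 1) * Phi x <= a * r * Ea a * K).
    { apply Rle_trans with (a * r * exp (a * r) * Phi x). apply Rmult_le_compat_r; auto.
      apply Rle_trans with (a * r * Ea a * Phi x). apply Rmult_le_compat_r; auto.
      apply Rmult_le_compat_l; nra. apply Rmult_le_compat_l; auto. pose proof (Ea_ge1 a Ha). apply Rmult_le_pos; [apply Rmult_le_pos|]; lra. }
    nra. }
  intros x y. apply Rabs_le; split.
  - pose proof (Hgen y x). rewrite dist_sym in H. lra.
  - apply Hgen. Qed.

Lemma meas_of_cont : forall g, continuous_Om d g -> measurable d g.
Proof. intros g Hg a. apply borel_open. intros x Hx.
  destruct (Hg x (g x - a) ltac:(lra)) as [del [Hdel H]]. exists del; split; auto.
  intros y Hy. specialize (H y Hy). apply Rabs_def2 in H. lra. Qed.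

Lemma cone_cont : forall a Phi K, 0 <= a -> ncone a Phi -> (forall x, Phi x <= K) -> continuous_Om d Phi.
Proof. intros a Phi K Ha Hc HK x e He.
  set (C := a * Ea a * K).
  assert (HC : 0 <= C). { unfold C. pose proof (Ea_ge1 a Ha). pose proof (proj1 Hc x). pose proof (HK x). 
    apply Rmult_le_pos; [apply Rmult_le_pos; lra|lra]. }
  destruct (rpow_small (e / (C + 1))) as [del [Hdel Hs]].
  { apply Rdiv_lt_0_compat; lra. }
  exists del; split; auto. intros y Hy.
  pose proof (cone_diff a Phi K Ha Hc HK x y) as H. fold C in H.
  assert (Hr : rpow (d x y) beta < e / (C + 1)) by (apply Hs; split; auto; apply dist_nonneg).
  pose proof (rpow_nonneg (d x y)).
  apply (Rmult_lt_compat_l (C + 1)) in Hr; [|lra].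
  replace ((C + 1) * (e / (C + 1))) with e in Hr by (field; lra). nra. Qed.

Lemma cone_inC : forall a Phi K, 0 <= a -> ncone a Phi -> (forall x, Phi x <= K) -> in_C d p_tau beta Phi.
Proof. intros a Phi K Ha Hc HK. split; [eapply cone_cont; eauto|split].
  - exists K; intro x. rewrite Rabs_right; auto. apply Rle_ge, (proj1 Hc).
  - exists (a * Ea a * K). intros k x y _.
    pose proof (cone_diff a Phi K Ha Hc HK (pik p_tau k y) (pik p_tau k x)) as H.
    rewrite dist_sym in H. eapply Rle_trans; [apply H|].
    apply Rmult_le_compat_l.
    + pose proof (Ea_ge1 a Ha). pose proof (proj1 Hc x). pose proof (HK x).
      apply Rmult_le_pos; [apply Rmult_le_pos; lra|lra].
    + apply rpow_mono; split; [apply dist_nonneg|apply dist_pik]. Qed.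
Definition Yb (k : nat) (s : Z -> nat) (x : Omega) := pik p_tau k (branch_apply zeta k s x).

Lemma Pk_unfold : forall k Phi x, Pk' k Phi x =
  / INR (b ^ (2 * k + 1)) * sum_choices b (coords k) (fun s => exp (f (Yb k s x)) * Phi (Yb k s x)).
Proof. reflexivity. Qed.

Lemma NB_pos : forall k, 0 < INR (b ^ (2 * k + 1)).
Proof. intro k. apply lt_0_INR. pose proof b_pos. induction (2 * k + 1)%nat; simpl; lia. Qed.

Lemma SC_coords_const : forall k c, / INR (b ^ (2 * k + 1)) * sum_choices b (coords k) (fun _ => c) = c.
Proof. intros. rewrite SC_const, coords_length. pose proof (NB_pos k). field; lra. Qed.

Lemma Pk_lin : forall k Phi Psi t x,
  Pk' k (fun y => Phi y - t * Psi y) x = Pk' k Phi x - t * Pk' k Psi x.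
Proof. intros. rewrite !Pk_unfold.
  rewrite (SC_ext _ _ _ (fun s => 1 * (exp (f (Yb k s x)) * Phi (Yb k s x)) + (- t) * (exp (f (Yb k s x)) * Psi (Yb k s x)))).
  rewrite SC_lin; ring. intros; ring. Qed.

Lemma Pk_mono : forall k Phi Psi x, (forall y, Phi y <= Psi y) -> Pk' k Phi x <= Pk' k Psi x.
Proof. intros. rewrite !Pk_unfold. apply Rmult_le_compat_l. apply Rlt_le, Rinv_0_lt_compat, NB_pos.
  apply SC_mono; [apply b_pos|]. intros s _. apply Rmult_le_compat_l; auto. apply Rlt_le, exp_pos. Qed.

Lemma Pk_nonneg : forall k Phi x, (forall y, 0 <= Phi y) -> 0 <= Pk' k Phi x.
Proof. intros. rewrite Pk_unfold. rewrite <- (SC_coords_const k 0). apply Rmult_le_compat_l.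
  apply Rlt_le, Rinv_0_lt_compat, NB_pos. apply SC_mono; [apply b_pos|]. intros s _.
  apply Rmult_le_pos; auto. apply Rlt_le, exp_pos. Qed.

Lemma Rabs_le_between : forall a b0, Rabs a <= b0 -> - b0 <= a <= b0.
Proof. intros a b0 H. pose proof (Rle_abs a). pose proof (Rle_abs (- a)). rewrite Rabs_Ropp in *. lra. Qed.

Lemma f_le_Mf : forall x, f x <= Mf /\ - Mf <= f x.
Proof. intro x; pose proof (HMf x) as H; apply Rabs_le_between in H. lra. Qed.
Lemma Rabs_le_between' : forall a b0, - b0 <= a <= b0 -> Rabs a <= b0.
Proof. intros; apply Rabs_le; lra. Qed.

Lemma Pk_close : forall k Phi Psi e x, (forall y, Rabs (Phi y - Psi y) <= e) ->
  Rabs (Pk' k Phi x - Pk' k Psi x) <= exp Mf * e.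
Proof. intros k Phi Psi e x H.
  replace (Pk' k Phi x - Pk' k Psi x) with (Pk' k (fun y => Phi y - 1 * Psi y) x) by (rewrite Pk_lin; ring).
  rewrite Pk_unfold. pose proof (NB_pos k) as HN. apply Rinv_0_lt_compat in HN.
  assert (Hb : forall s, Rabs (exp (f (Yb k s x)) * (Phi (Yb k s x) - 1 * Psi (Yb k s x))) <= exp Mf * e).
  { intro s. rewrite Rabs_mult, Rmult_1_l. rewrite (Rabs_right (exp _)) by (apply Rle_ge, Rlt_le, exp_pos).
    apply Rmult_le_compat; [apply Rlt_le, exp_pos|apply Rabs_pos|apply exp_le, f_le_Mf|apply H]. }
  apply Rabs_le; split.
  - rewrite <- (SC_coords_const k (- (exp Mf * e))). apply Rmult_le_compat_l; [lra|].
    apply SC_mono; [apply b_pos|]. intros s _. specialize (Hb s). apply Rabs_le_between in Hb; lra.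
  - rewrite <- (SC_coords_const k (exp Mf * e)). apply Rmult_le_compat_l; [lra|].
    apply SC_mono; [apply b_pos|]. intros s _. specialize (Hb s). apply Rabs_le_between in Hb; lra. Qed.

Lemma Pk_one_lb : forall k x, exp (- Mf) <= Pk' k (fun _ => 1) x.
Proof. intros. rewrite Pk_unfold. rewrite <- (SC_coords_const k (exp (- Mf))) at 1. apply Rmult_le_compat_l.
  apply Rlt_le, Rinv_0_lt_compat, NB_pos. apply SC_mono; [apply b_pos|]. intros s _.
  rewrite Rmult_1_r. apply exp_le, f_le_Mf. Qed.

Lemma Pk_cone : forall a Phi k x y, 0 <= a -> ncone a Phi ->
  Pk' k Phi x <= exp (Tf a * rpow (d x y) beta) * Pk' k Phi y.
Proof. intros a Phi k x y Ha [Hpos Hc]. rewrite !Pk_unfold.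
  set (K := exp (Tf a * rpow (d x y) beta)).
  replace (K * (/ INR (b ^ (2 * k + 1)) * sum_choices b (coords k) (fun s => exp (f (Yb k s y)) * Phi (Yb k s y))))
    with (/ INR (b ^ (2 * k + 1)) * sum_choices b (coords k) (fun s => K * (exp (f (Yb k s y)) * Phi (Yb k s y)) + 0 * 0)).
  2:{ rewrite SC_lin. ring. }
  apply Rmult_le_compat_l. apply Rlt_le, Rinv_0_lt_compat, NB_pos.
  apply SC_mono; [apply b_pos|]. intros s Hs. rewrite Rmult_0_l, Rplus_0_r.
  set (X := Yb k s x). set (Y := Yb k s y). set (r := rpow (d x y) beta).
  assert (HdXY : d X Y <= eta * d x y) by apply dist_branch, Hs.
  assert (HrXY : rpow (d X Y) beta <= q * r).
  { unfold q, r; rewrite <- rpow_mult; [|lra|apply dist_nonneg]. apply rpow_mono; split; [apply dist_nonneg|auto]. }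
  assert (Hf1 : f X <= f Y + hf * rpow (d X Y) beta) by (apply (hf_bound k); unfold X, Y, Yb; apply pik_idem).
  assert (Hr0 : 0 <= rpow (d X Y) beta) by apply rpow_nonneg.
  assert (Hr1 : 0 <= r) by apply rpow_nonneg.
  pose proof hf_nonneg. pose proof q_bounds.
  assert (E1 : exp (f X) <= exp (f Y) * exp (hf * q * r)).
  { rewrite <- exp_plus. apply exp_le. nra. }
  assert (E2 : Phi X <= exp (a * q * r) * Phi Y).
  { eapply Rle_trans; [apply Hc|]. apply Rmult_le_compat_r; [apply Hpos|]. apply exp_le. nra. }
  unfold K, Tf. change (rpow (d x y) beta) with r. replace (q * (hf + a) * r) with (hf * q * r + a * q * r) by ring. rewrite exp_plus.
  pose proof (Hpos X). pose proof (Hpos Y). pose proof (exp_pos (f X)). pose proof (exp_pos (f Y)).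
  pose proof (exp_pos (hf * q * r)). pose proof (exp_pos (a * q * r)).
  apply Rle_trans with (exp (f Y) * exp (hf * q * r) * (exp (a * q * r) * Phi Y)).
  - apply Rmult_le_compat; lra.
  - right; ring. Qed.

Lemma Lop_spec : forall Phi g x, Un_cv (fun k => Pk' k Phi x) g -> Lop Phi x = g / lam.
Proof. intros. unfold Lop. rewrite (lim_or0_eq _ g); auto. Qed.

Lemma lam_pos : 0 < lam.
Proof. destruct Hlam as [g [Hg Hi]].
  assert (Hge : forall x, exp (- Mf) <= g x).
  { intro x. apply (@Rle_cv_lim (fun _ => exp (- Mf)) (fun k => Pk' k (fun _ => 1) x)).
    intro; apply Pk_one_lb. apply Un_cv_const. apply Hg. }
  assert (HH : HIN g lam). { apply HIN_of_HI; auto. intro x; pose proof (exp_pos (- Mf)); pose proof (Hge x); lra. }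
  pose proof (HIN_ge_const g lam (exp (- Mf)) HH (Rlt_le _ _ (exp_pos _)) Hge). pose proof (exp_pos (- Mf)); lra. Qed.

Lemma Good_bounds : forall a m Phi, 0 <= a -> Good a m Phi -> forall x, m / Ea a <= Phi x <= Ea a * m.
Proof. intros a m Phi Ha [[Hpos Hc] Hi] x. pose proof (Ea_ge1 a Ha) as HE. split.
  - assert (m <= Ea a * Phi x).
    { apply (HIN_le_const Phi); auto. intro y. eapply Rle_trans; [apply Hc|].
      apply Rmult_le_compat_r; [apply Hpos|apply exp_cone_le; auto]. }
    apply (Rmult_le_reg_l (Ea a)); [lra|]. unfold Rdiv. replace (Ea a * (m * / Ea a)) with m by (field; lra). auto.
  - assert (Phi x / Ea a <= m).
    { apply (HIN_ge_const Phi); auto. unfold Rdiv; apply Rmult_le_pos; [apply Hpos|apply Rlt_le, Rinv_0_lt_compat; lra].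
      intro y. apply (Rmult_le_reg_l (Ea a)); [lra|]. unfold Rdiv. replace (Ea a * (Phi x * / Ea a)) with (Phi x) by (field; lra).
      eapply Rle_trans; [apply Hc|]. apply Rmult_le_compat_r; [apply Hpos|apply exp_cone_le; auto]. }
    unfold Rdiv in H. apply (Rmult_le_compat_l (Ea a)) in H; [|lra].
    replace (Ea a * (Phi x * / Ea a)) with (Phi x) in H by (field; lra). auto. Qed.

Lemma Good_L : forall a m Phi, 0 <= a -> Good a m Phi ->
  (forall x, Un_cv (fun k => Pk' k Phi x) (lam * Lop Phi x)) /\ Good (Tf a) m (Lop Phi).
Proof. intros a m Phi Ha HG. pose proof (Good_bounds a m Phi Ha HG) as Hbd.
  destruct HG as [Hcone Hi].
  assert (HC : in_C d p_tau beta Phi) by (apply (cone_inC a Phi (Ea a * m)); auto; intro; apply Hbd).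
  destruct (Heig Phi HC) as [g [Hg Hgi]].
  assert (HL : forall x, Lop Phi x = g x / lam) by (intro; apply Lop_spec; apply Hg).
  pose proof lam_pos as Hl.
  assert (HL' : forall x, lam * Lop Phi x = g x) by (intro; rewrite HL; field; lra).
  split. { intro x; rewrite HL'; apply Hg. }
  assert (Hgpos : forall x, 0 <= g x).
  { intro x. apply (@Rle_cv_lim (fun _ => 0) (fun k => Pk' k Phi x)); [|apply Un_cv_const|apply Hg].
    intro; apply Pk_nonneg, Hcone. }
  assert (Hgc : forall x y, g x <= exp (Tf a * rpow (d x y) beta) * g y).
  { intros x y. apply (@Rle_cv_lim (fun k => Pk' k Phi x) (fun k => exp (Tf a * rpow (d x y) beta) * Pk' k Phi y)).
    intro; apply Pk_cone; auto. apply Hg. apply CV_mult; [apply Un_cv_const|apply Hg]. }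
  assert (Hgi' : HIN g (lam * m)) by (apply HIN_of_HI; auto; apply Hgi, HI_of_HIN; auto).
  assert (Heq : Lop Phi = fun x => / lam * g x).
  { apply functional_extensionality; intro x; rewrite HL; unfold Rdiv; ring. }
  rewrite Heq. split; [split|].
  - intro x. apply Rmult_le_pos; auto. apply Rlt_le, Rinv_0_lt_compat; auto.
  - intros x y. specialize (Hgc x y). apply (Rmult_le_compat_l (/ lam)) in Hgc; [|apply Rlt_le, Rinv_0_lt_compat; auto].
    lra.
  - assert (Hs := HIN_scale g (lam * m) (/ lam) Hgi' ltac:(apply Rinv_0_lt_compat; auto)).
    replace (/ lam * (lam * m)) with m in Hs by (field; lra). exact Hs. Qed.
Lemma astar_nonneg : 0 <= astar.
Proof. unfold astar. pose proof hf_nonneg; pose proof q_bounds. apply Rmult_le_pos; auto.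
  unfold Rdiv; apply Rmult_le_pos; [lra|apply Rlt_le, Rinv_0_lt_compat; lra]. Qed.

Lemma Tf_nonneg : forall a, 0 <= a -> 0 <= Tf a.
Proof. intros. unfold Tf. pose proof hf_nonneg; pose proof q_bounds. apply Rmult_le_pos; lra. Qed.

Lemma Titer_nonneg : forall n a, 0 <= a -> 0 <= Nat.iter n Tf a.
Proof. induction n; intros; simpl; auto. apply Tf_nonneg; auto. Qed.

Lemma Titer_formula : forall n a, Nat.iter n Tf a = astar + q ^ n * (a - astar).
Proof. induction n; intros; simpl. ring. rewrite IHn. unfold Tf, astar. pose proof q_bounds. field. lra. Qed.

Lemma Un_cv_ext : forall u v l, (forall n, u n = v n) -> Un_cv u l -> Un_cv v l.
Proof. intros u v l H Hu e He. destruct (Hu e He) as [N HN]. exists N; intros; rewrite <- H; auto. Qed.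

Lemma Good_mono : forall a a' m Phi, a <= a' -> Good a m Phi -> Good a' m Phi.
Proof. intros a a' m Phi Ha [[Hpos Hc] Hi]. split; auto. split; auto. intros x y.
  eapply Rle_trans; [apply Hc|]. apply Rmult_le_compat_r; [apply Hpos|]. apply exp_le.
  pose proof (rpow_nonneg (d x y)). nra. Qed.

Lemma Good_iter : forall a m Phi, 0 <= a -> Good a m Phi -> forall n,
  Good (Nat.iter n Tf a) m (Liter n Phi) /\
  (forall x, Un_cv (fun k => Pk' k (Liter n Phi) x) (lam * Liter (S n) Phi x)).
Proof. intros a m Phi Ha HG n. induction n as [|n [IH1 IH2]].
  - destruct (Good_L a m Phi Ha HG) as [H1 H2]. split; [exact HG|exact H1].
  - destruct (Good_L _ m _ (Titer_nonneg n a Ha) IH1) as [H1 H2].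
    destruct (Good_L _ m _ (Titer_nonneg (S n) a Ha) H2) as [H3 H4]. split; [exact H2|exact H3]. Qed.

Lemma Good_sub : forall a m Phi t, 0 <= a -> Good a m Phi -> 0 <= t -> (forall x, 2 * t <= Phi x) ->
  Good (2 * a) (m - t) (fun y => Phi y - t * 1).
Proof. intros a m Phi t Ha HG Ht Hge. pose proof (Good_bounds a m Phi Ha HG) as Hbd.
  destruct HG as [[Hpos Hc] Hi]. split; [split|].
  - intro x; specialize (Hge x); lra.
  - intros x y. set (r := rpow (d x y) beta). pose proof (rpow_nonneg (d x y)) as Hr; fold r in Hr.
    specialize (Hc x y); fold r in Hc. replace (2 * a * r) with (a * r + a * r) by ring. rewrite exp_plus.
    set (u := exp (a * r)) in *. assert (Hu : 1 <= u) by (unfold u; rewrite <- exp_0; apply exp_le; nra).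
    specialize (Hge y). pose proof (Hpos y).
    assert (K1 : 0 <= u * Phi y - t * (u + 1)) by nra.
    assert (K2 : 0 <= (u - 1) * (u * Phi y - t * (u + 1))) by (apply Rmult_le_pos; lra).
    nra.
  - replace (fun y => Phi y - t * 1) with (fun y => Phi y - t) by (apply functional_extensionality; intro; ring).
    apply (HIN_sub Phi m t (Ea a * m)); auto. intro x; split; [specialize (Hge x); lra|apply Hbd]. Qed.

Lemma Lop_lin : forall Phi Psi t,
  (forall x, Un_cv (fun k => Pk' k Phi x) (lam * Lop Phi x)) ->
  (forall x, Un_cv (fun k => Pk' k Psi x) (lam * Lop Psi x)) ->
  Lop (fun y => Phi y - t * Psi y) = fun x => Lop Phi x - t * Lop Psi x.
Proof. intros Phi Psi t H1 H2. apply functional_extensionality; intro x.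
  rewrite (Lop_spec _ (1 * (lam * Lop Phi x) + (- t) * (lam * Lop Psi x))).
  - pose proof lam_pos. field; lra.
  - eapply Un_cv_ext; [|apply Un_cv_lin; [apply H1|apply H2]]. intro n; simpl. rewrite Pk_lin; ring. Qed.

Lemma Liter_lin : forall a a' m m' Phi Psi t, 0 <= a -> 0 <= a' -> Good a m Phi -> Good a' m' Psi ->
  forall n, Liter n (fun y => Phi y - t * Psi y) = fun x => Liter n Phi x - t * Liter n Psi x.
Proof. intros a a' m m' Phi Psi t Ha Ha' H1 H2 n. induction n.
  - reflexivity.
  - change (Liter (S n) (fun y => Phi y - t * Psi y)) with (Lop (Liter n (fun y => Phi y - t * Psi y))).
    rewrite IHn. apply Lop_lin.
    + apply (Good_iter a m Phi Ha H1 n).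
    + apply (Good_iter a' m' Psi Ha' H2 n). Qed.

Definition one : Omega -> R := fun _ => 1.

Lemma Good_one : Good 0 1 one.
Proof. split; [split|].
  - intro; unfold one; lra.
  - intros; unfold one. rewrite Rmult_0_l, exp_0; lra.
  - destruct (HIN_exists one 1) as [v Hv]. apply meas_const. intro; unfold one; lra.
    assert (Hv1 : v = 1).
    { apply Rle_antisym.
      + apply (HIN_le_const one); auto. intro; unfold one; lra.
      + apply (HIN_ge_const one); auto. lra. intro; unfold one; lra. }
    rewrite <- Hv1; exact Hv. Qed.

Definition AA := 2 * astar + 2.
Definition cc := / (2 * Ea (AA / 2)).

Lemma cc_bounds : 0 < cc <= 1/2.
Proof. unfold cc. assert (0 <= AA / 2) by (unfold AA; pose proof astar_nonneg; lra).
  pose proof (Ea_ge1 _ H). split. apply Rinv_0_lt_compat; lra.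
  apply (Rmult_le_reg_l (2 * Ea (AA / 2))); [lra|]. rewrite Rinv_r; lra. Qed.

Lemma coupling : forall N, Nat.iter N Tf AA <= AA / 2 ->
  forall k Phi Psi m, 0 <= m -> Good AA m Phi -> Good AA m Psi ->
  forall x, Rabs (Liter (k * N) Phi x - Liter (k * N) Psi x) <= 2 * Ea AA * m * (1 - cc) ^ k.
Proof. intros N HN k. assert (HA : 0 <= AA) by (unfold AA; pose proof astar_nonneg; lra).
  pose proof cc_bounds as Hc.
  induction k as [|k IH]; intros Phi Psi m Hm H1 H2 x.
  - simpl. pose proof (Good_bounds _ _ _ HA H1 x). pose proof (Good_bounds _ _ _ HA H2 x).
    pose proof (proj1 (proj1 H1) x). pose proof (proj1 (proj1 H2) x).
    apply Rabs_le; split; nra.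
  - replace (S k * N)%nat with (k * N + N)%nat by lia. unfold Liter. rewrite !Nat.iter_add.
    fold (Liter N Phi) (Liter N Psi). fold (Liter (k * N) (Liter N Phi)) (Liter (k * N) (Liter N Psi)).
    assert (HA2 : 0 <= AA / 2) by lra.
    assert (G1 : Good (AA / 2) m (Liter N Phi)) by (eapply Good_mono; [apply HN|apply (Good_iter AA m Phi HA H1 N)]).
    assert (G2 : Good (AA / 2) m (Liter N Psi)) by (eapply Good_mono; [apply HN|apply (Good_iter AA m Psi HA H2 N)]).
    set (t := cc * m).
    assert (Ht : 0 <= t) by (unfold t; nra).
    assert (Hge : forall Phi1, Good (AA / 2) m Phi1 -> forall y, 2 * t <= Phi1 y).
    { intros Phi1 HG y. pose proof (Good_bounds _ _ _ HA2 HG y) as [Hb _]. unfold t, cc.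
      pose proof (Ea_ge1 _ HA2). replace (2 * (/ (2 * Ea (AA / 2)) * m)) with (m / Ea (AA / 2)); [lra|].
      field; lra. }
    assert (S1 := Good_sub _ _ _ t HA2 G1 Ht (Hge _ G1)).
    assert (S2 := Good_sub _ _ _ t HA2 G2 Ht (Hge _ G2)).
    replace (2 * (AA / 2)) with AA in S1, S2 by field.
    assert (Hm' : 0 <= m - t) by (unfold t; nra).
    pose proof (IH _ _ (m - t) Hm' S1 S2 x) as HI.
    rewrite (Liter_lin _ _ _ _ _ _ t HA2 (Rle_refl 0) G1 Good_one) in HI.
    rewrite (Liter_lin _ _ _ _ _ _ t HA2 (Rle_refl 0) G2 Good_one) in HI.
    replace (Liter (k * N) (Liter N Phi) x - Liter (k * N) (Liter N Psi) x) with
      (Liter (k * N) (Liter N Phi) x - t * Liter (k * N) one x - (Liter (k * N) (Liter N Psi) x - t * Liter (k * N) one x)) by ring.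
    eapply Rle_trans; [apply HI|]. unfold t. simpl. right; ring. Qed.
Lemma pow_le1' : forall x n, 0 <= x <= 1 -> x ^ n <= 1.
Proof. intros x n H; induction n; simpl; [lra|]. pose proof (pow_le x n (proj1 H)). nra. Qed.

Definition rho := 1 - cc.
Definition CC := 2 * Ea AA.

Lemma AA_facts : 0 <= AA /\ astar <= AA /\ 0 <= astar.
Proof. unfold AA; pose proof astar_nonneg; lra. Qed.

Lemma rho_bounds : 0 < rho < 1.
Proof. unfold rho; pose proof cc_bounds; lra. Qed.

Lemma CC_pos : 0 < CC.
Proof. unfold CC. pose proof (Ea_ge1 AA (proj1 AA_facts)); lra. Qed.

Lemma small_pow : forall C e, 0 <= C -> 0 < e -> exists k, forall n, (n >= k)%nat -> C * rho ^ n < e.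
Proof. intros C e HC He. pose proof rho_bounds.
  destruct (pow_lt_1_zero rho ltac:(rewrite Rabs_right; lra) (e / (C + 1))) as [k Hk].
  { apply Rdiv_lt_0_compat; lra. }
  exists k; intros n Hn. specialize (Hk n Hn). rewrite Rabs_right in Hk.
  2:{ apply Rle_ge, pow_le; lra. }
  apply (Rmult_lt_compat_l (C + 1)) in Hk; [|lra]. replace ((C + 1) * (e / (C + 1))) with e in Hk by (field; lra).
  pose proof (pow_le rho n ltac:(lra)). nra. Qed.

Lemma zero_of_bound : forall z C, 0 <= C -> (forall k, Rabs z <= C * rho ^ k) -> z = 0.
Proof. intros z C HC H. destruct (Req_dec z 0); auto. exfalso.
  destruct (small_pow C (Rabs z) HC) as [k Hk]. apply Rabs_pos_lt; auto.
  specialize (Hk k (le_n k)). specialize (H k). lra. Qed.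

Lemma exists_N : exists N, Nat.iter N Tf AA <= AA / 2.
Proof. pose proof q_bounds. pose proof astar_nonneg.
  destruct (pow_lt_1_zero q ltac:(rewrite Rabs_right; lra) (/ (astar + 2))) as [N HN].
  { apply Rinv_0_lt_compat; lra. }
  exists N. specialize (HN N (le_n N)). rewrite Rabs_right in HN by (apply Rle_ge, pow_le; lra).
  rewrite Titer_formula. unfold AA. replace (2 * astar + 2 - astar) with (astar + 2) by ring.
  apply (Rmult_lt_compat_r (astar + 2)) in HN; [|lra]. rewrite Rinv_l in HN by lra. lra. Qed.

Lemma Good_one_iter : forall n, Good astar 1 (Liter n one).
Proof. intro n. eapply Good_mono; [|apply (Good_iter 0 1 one (Rle_refl 0) Good_one n)].
  rewrite Titer_formula. pose proof q_bounds. pose proof astar_nonneg. pose proof (pow_le q n ltac:(lra)).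
  assert (q ^ n <= 1) by (apply pow_le1'; lra). nra. Qed.

Lemma Good_fixed_iter : forall h, Lop h = h -> forall n, Liter n h = h.
Proof. intros h H n; induction n; auto. change (Lop (Liter n h) = h). rewrite IHn; auto. Qed.

Lemma Lop_fixed : forall h, Good astar 1 h -> P_is b zeta p_tau f h (fun x => lam * h x) -> Lop h = h.
Proof. intros h HG HP. destruct (Good_L astar 1 h astar_nonneg HG) as [H1 _].
  apply functional_extensionality; intro x. pose proof (UL_sequence _ _ _ (H1 x) (HP x)).
  pose proof lam_pos. apply (Rmult_eq_reg_l lam); lra. Qed.

Section Construction.
Variable N : nat.
Hypothesis HN : Nat.iter N Tf AA <= AA / 2.

Definition gseq (k : nat) := Liter (k * N) one.

Lemma gseq_Good : forall k, Good astar 1 (gseq k).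
Proof. intro; apply Good_one_iter. Qed.

Lemma gseq_GoodA : forall k, Good AA 1 (gseq k).
Proof. intro; eapply Good_mono; [apply AA_facts|apply gseq_Good]. Qed.

Lemma gseq_close : forall k j x, Rabs (gseq k x - gseq (k + j) x) <= CC * rho ^ k.
Proof. intros k j x. unfold gseq. replace ((k + j) * N)%nat with (k * N + j * N)%nat by lia.
  unfold Liter at 2. rewrite Nat.iter_add. fold (Liter (j * N) one). fold (Liter (k * N) (Liter (j * N) one)).
  pose proof (coupling N HN k one (Liter (j * N) one) 1 ltac:(lra)) as H.
  unfold CC, rho. rewrite <- (Rmult_1_r (2 * Ea AA)). apply H.
  - eapply Good_mono; [|apply Good_one]. apply AA_facts.
  - eapply Good_mono; [apply AA_facts|apply Good_one_iter]. Qed.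

Lemma gseq_cauchy : forall x, Cauchy_crit (fun k => gseq k x).
Proof. intros x e He. destruct (small_pow CC (e / 2) (Rlt_le _ _ CC_pos) ltac:(lra)) as [K HK].
  exists K. intros n m Hn Hm. unfold Rdist.
  pose proof (gseq_close K (n - K) x) as H1. pose proof (gseq_close K (m - K) x) as H2.
  replace (K + (n - K))%nat with n in H1 by lia. replace (K + (m - K))%nat with m in H2 by lia.
  specialize (HK K (le_n K)).
  replace (gseq n x - gseq m x) with (- (gseq K x - gseq n x) + (gseq K x - gseq m x)) by ring.
  eapply Rle_lt_trans; [apply Rabs_triang|]. rewrite Rabs_Ropp. lra. Qed.

Definition hh (x : Omega) : R := proj1_sig (R_complete _ (gseq_cauchy x)).

Lemma hh_cv : forall x, Un_cv (fun k => gseq k x) (hh x).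
Proof. intro x; unfold hh; destruct (R_complete _ (gseq_cauchy x)); auto. Qed.

Lemma hh_approx : forall k x, Rabs (gseq k x - hh x) <= CC * rho ^ k.
Proof. intros k x. apply le_eps; intros e He.
  destruct (hh_cv x e He) as [J HJ]. specialize (HJ (k + J)%nat ltac:(lia)). unfold Rdist in HJ.
  pose proof (gseq_close k J x).
  replace (gseq k x - hh x) with ((gseq k x - gseq (k + J) x) + (gseq (k + J) x - hh x)) by ring.
  eapply Rle_trans; [apply Rabs_triang|]. lra. Qed.

Lemma hh_bounds : forall x, 1 / Ea astar <= hh x <= Ea astar * 1.
Proof. intro x. split.
  - apply (@Rle_cv_lim (fun _ => 1 / Ea astar) (fun k => gseq k x)); [|apply Un_cv_const|apply hh_cv].
    intro k; apply (Good_bounds astar 1 (gseq k) astar_nonneg (gseq_Good k)).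
  - apply (@Rle_cv_lim (fun k => gseq k x) (fun _ => Ea astar * 1)); [|apply hh_cv|apply Un_cv_const].
    intro k; apply (Good_bounds astar 1 (gseq k) astar_nonneg (gseq_Good k)). Qed.

Lemma hh_cone : ncone astar hh.
Proof. split.
  - intro x; pose proof (hh_bounds x). pose proof (Ea_ge1 astar astar_nonneg).
    assert (0 < 1 / Ea astar) by (apply Rdiv_lt_0_compat; lra). lra.
  - intros x y. apply (@Rle_cv_lim (fun k => gseq k x) (fun k => exp (astar * rpow (d x y) beta) * gseq k y)).
    + intro k; apply (proj2 (proj1 (gseq_Good k))).
    + apply hh_cv.
    + apply CV_mult; [apply Un_cv_const|apply hh_cv]. Qed.

Lemma hh_cont : continuous_Om d hh.
Proof. apply (cone_cont astar hh (Ea astar * 1) astar_nonneg hh_cone). intro; apply hh_bounds. Qed.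

Lemma hh_int : HIN hh 1.
Proof. destruct (HIN_exists hh (Ea astar * 1)) as [v Hv].
  { apply meas_of_cont, hh_cont. }
  { intro x; split; [apply (proj1 hh_cone)|apply hh_bounds]. }
  pose proof (Ea_ge1 astar astar_nonneg) as HE.
  assert (Hd : forall k, Rabs (v - 1) <= (CC * Ea astar) * rho ^ k).
  { intro k. set (dk := CC * rho ^ k * Ea astar).
    assert (Hdk : 0 <= dk) by (unfold dk; pose proof CC_pos; pose proof rho_bounds; pose proof (pow_le rho k ltac:(lra)); 
      apply Rmult_le_pos; [apply Rmult_le_pos|]; lra).
    assert (Hg : forall x, CC * rho ^ k <= dk * gseq k x).
    { intro x. pose proof (Good_bounds astar 1 (gseq k) astar_nonneg (gseq_Good k) x) as [Hb _].
      unfold dk. apply Rle_trans with (CC * rho ^ k * Ea astar * (1 / Ea astar)).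
      right; field; lra. apply Rmult_le_compat_l; auto. }
    assert (Hlow : 1 - dk <= v).
    { destruct (Rle_dec (1 - dk) 0). pose proof (HIN_nonneg hh v Hv); lra.
      rewrite <- (Rmult_1_r (1 - dk)).
      apply (HIN_mono (gseq k) hh 1 v (1 - dk) (proj2 (gseq_Good k)) Hv); [lra|].
      intro x. pose proof (hh_approx k x). pose proof (Hg x). apply Rabs_le_between in H. lra. }
    assert (Hup : v <= 1 + dk).
    { pose proof (HIN_scale (gseq k) 1 (1 + dk) (proj2 (gseq_Good k)) ltac:(lra)) as Hs.
      rewrite <- (Rmult_1_l v). replace (1 + dk) with ((1 + dk) * 1) by ring.
      apply (HIN_mono hh _ v _ 1 Hv Hs); [lra|].
      intro x. pose proof (hh_approx k x). pose proof (Hg x). apply Rabs_le_between in H. lra. }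
    apply Rabs_le; unfold dk in *; split; nra. }
  replace 1 with v; auto. symmetry in |- *.
  assert (Hz : v - 1 = 0).
  { apply (zero_of_bound _ (CC * Ea astar)); auto. pose proof CC_pos; apply Rmult_le_pos; lra. }
  lra. Qed.

Lemma hh_Good : Good astar 1 hh.
Proof. split; [apply hh_cone|apply hh_int]. Qed.

Lemma hh_fixed : Lop hh = hh.
Proof. apply functional_extensionality; intro x.
  apply Rminus_diag_uniq.
  pose proof lam_pos as Hl.
  apply (zero_of_bound _ (exp Mf / lam * CC + CC + CC)).
  { pose proof CC_pos. pose proof (exp_pos Mf). assert (0 < exp Mf / lam) by (apply Rdiv_lt_0_compat; lra).
    assert (0 <= exp Mf / lam * CC) by (apply Rmult_le_pos; lra). lra. }
  intro k.
  destruct (Good_L astar 1 hh astar_nonneg hh_Good) as [Hh _].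
  destruct (Good_L astar 1 (gseq k) astar_nonneg (gseq_Good k)) as [Hg _].
  assert (E1 : Rabs (Lop hh x - Lop (gseq k) x) <= exp Mf / lam * (CC * rho ^ k)).
  { assert (Hc : Un_cv (fun j => 1 * Pk' j hh x + (-1) * Pk' j (gseq k) x) (1 * (lam * Lop hh x) + (-1) * (lam * Lop (gseq k) x)))
      by (apply Un_cv_lin; auto).
    replace (1 * (lam * Lop hh x) + (-1) * (lam * Lop (gseq k) x)) with (lam * Lop hh x - lam * Lop (gseq k) x) in Hc by ring.
    assert (Hb : forall j, Rabs (1 * Pk' j hh x + (-1) * Pk' j (gseq k) x) <= exp Mf * (CC * rho ^ k)).
    { intro j. replace (1 * Pk' j hh x + (-1) * Pk' j (gseq k) x) with (Pk' j hh x - Pk' j (gseq k) x) by ring.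
      apply Pk_close. intro y. rewrite Rabs_minus_sym. apply hh_approx. }
    assert (Hlim : Rabs (lam * Lop hh x - lam * Lop (gseq k) x) <= exp Mf * (CC * rho ^ k)).
    { apply Rabs_le; split.
      - apply (@Rle_cv_lim (fun _ => - (exp Mf * (CC * rho ^ k))) (fun j => 1 * Pk' j hh x + (-1) * Pk' j (gseq k) x));
          [|apply Un_cv_const|apply Hc].
        intro j; specialize (Hb j); apply Rabs_le_between in Hb; lra.
      - apply (@Rle_cv_lim (fun j => 1 * Pk' j hh x + (-1) * Pk' j (gseq k) x) (fun _ => exp Mf * (CC * rho ^ k)));
          [|apply Hc|apply Un_cv_const].
        intro j; specialize (Hb j); apply Rabs_le_between in Hb; lra. }
    replace (lam * Lop hh x - lam * Lop (gseq k) x) with (lam * (Lop hh x - Lop (gseq k) x)) in Hlim by ring.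
    rewrite Rabs_mult, (Rabs_right lam) in Hlim by lra.
    apply (Rmult_le_reg_l lam); auto. replace (lam * (exp Mf / lam * (CC * rho ^ k))) with (exp Mf * (CC * rho ^ k)) by (field; lra).
    auto. }
  assert (E2 : Rabs (Lop (gseq k) x - gseq k x) <= CC * rho ^ k).
  { change (Lop (gseq k) x) with (Liter (S (k * N)) one x). unfold Liter. rewrite Nat.iter_succ_r.
    fold (Liter (k * N) (Lop one)). fold (Liter (k * N) one). change (Lop one) with (Liter 1 one).
    pose proof (coupling N HN k (Liter 1 one) one 1 ltac:(lra)) as H. unfold CC, rho.
    rewrite <- (Rmult_1_r (2 * Ea AA)). apply H.
    - eapply Good_mono; [apply AA_facts|apply Good_one_iter].
    - eapply Good_mono; [|apply Good_one]. apply AA_facts. }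
  pose proof (hh_approx k x) as E3.
  replace (Lop hh x - hh x) with ((Lop hh x - Lop (gseq k) x) + (Lop (gseq k) x - gseq k x) + (gseq k x - hh x)) by ring.
  eapply Rle_trans; [apply Rabs_triang|]. eapply Rle_trans; [apply Rplus_le_compat_r, Rabs_triang|].
  replace ((exp Mf / lam * CC + CC + CC) * rho ^ k) with (exp Mf / lam * (CC * rho ^ k) + CC * rho ^ k + CC * rho ^ k) by ring.
  lra. Qed.

End Construction.
Lemma main_sec : exists h,
    Delta_f d nu0 (holder_semi d p_tau beta f) eta beta h /\
    P_is b zeta p_tau f h (fun x => lam * h x) /\
    (forall h', Delta_f d nu0 (holder_semi d p_tau beta f) eta beta h' ->
                P_is b zeta p_tau f h' (fun x => lam * h' x) -> forall x, h' x = h x) /\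
    (forall x, 0 < h x).
Proof. destruct exists_N as [N HN]. exists (hh N HN).
  pose proof (Ea_ge1 astar astar_nonneg) as HE.
  split; [|split; [|split]].
  - split; [apply (hh_cont N HN)|split; [apply (proj1 (hh_cone N HN))|split]].
    + apply HI_of_HIN, hh_int; auto.
    + intros x y. exact (proj2 (hh_cone N HN) x y).
  - intro x. destruct (Good_L astar 1 (hh N HN) astar_nonneg (hh_Good N HN)) as [H _].
    rewrite (hh_fixed N HN) in H. apply H.
  - intros h' [Hc' [Hpos' [Hint' Hcone']]] HP' x.
    assert (HG' : Good astar 1 h').
    { split; [split; [exact Hpos'|intros y z; exact (Hcone' y z)]|apply HIN_of_HI; auto]. }
    assert (HF' := Lop_fixed h' HG' HP').
    assert (HF := hh_fixed N HN).
    apply Rminus_diag_uniq. apply (zero_of_bound _ (CC * 1)).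
    { pose proof CC_pos; lra. }
    intro k. rewrite <- (Good_fixed_iter h' HF' (k * N)). rewrite <- (Good_fixed_iter (hh N HN) HF (k * N)).
    unfold CC, rho. apply (coupling N HN k h' (hh N HN) 1); [lra| |].
    + eapply Good_mono; [apply AA_facts|exact HG'].
    + eapply Good_mono; [apply AA_facts|apply (hh_Good N HN)].
  - intro x. pose proof (hh_bounds N HN x) as [H _].
    assert (0 < 1 / Ea astar) by (apply Rdiv_lt_0_compat; lra). lra. Qed.

End Main.

Theorem mainTheorem5
  (dI : I -> I -> R) (theta : R) (tau : I -> I) (b : nat) (zeta : nat -> I -> I)
  (p_tau : I) (eta beta : R) (f : Omega -> R) (nu0 : (Omega -> Prop) -> R) (lam : R)
  (HdI : is_metric dI) (HdIb : exists M, forall s t, dI s t <= M)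
  (Htheta : 0 < theta < 1)
  (Htau : inverse_branches tau b zeta) (Hp : tau p_tau = p_tau)
  (Heta : 0 < eta < 1)
  (Hcontr : forall j s t, (j < b)%nat -> dI (zeta j s) (zeta j t) <= eta * dI s t)
  (Hbeta : 0 < beta <= 1)
  (Hf : in_C (distOm dI theta) p_tau beta f)
  (Hnu0 : prob_measure (distOm dI theta) nu0)
  (Hlam : exists g, P_is b zeta p_tau f (fun _ => 1) g /\
                    has_integral (distOm dI theta) nu0 g lam)
  (Heig : forall Phi, in_C (distOm dI theta) p_tau beta Phi ->
            exists g, P_is b zeta p_tau f Phi g /\
              forall v, has_integral (distOm dI theta) nu0 Phi v ->
                        has_integral (distOm dI theta) nu0 g (lam * v)) :
  exists h,
    Delta_f (distOm dI theta) nu0 (holder_semi (distOm dI theta) p_tau beta f) eta beta h /\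
    P_is b zeta p_tau f h (fun x => lam * h x) /\
    (forall h', Delta_f (distOm dI theta) nu0 (holder_semi (distOm dI theta) p_tau beta f) eta beta h' ->
                P_is b zeta p_tau f h' (fun x => lam * h' x) -> forall x, h' x = h x) /\
    (forall x, 0 < h x).
Proof.
  destruct HdIb as [M HM].
  pose proof Hf as [_ [[Mf HMf] _]].
  exact (main_sec dI theta tau b zeta p_tau eta beta f nu0 lam HdI M HM
    Htheta Htau Hp Heta Hcontr Hbeta Hf Mf HMf Hnu0 Hlam Heig).
Qed.
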